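(* Let $R$ be a commutative ring. Let $A, A', N, N'$ be $R$-modules and let $\alpha : A \to N$, $\beta : N \to A$, $\alpha' : A' \to N'$ and $f : A \to A'$ be $R$-module morphisms. Let $V \subset N$ and $V' \subset N'$ be submodules such that $(\alpha' \circ f \circ \beta)(V) \subset V'$ and $(\alpha \circ \beta)(V) \subset V$. Suppose that the restriction $\alpha \circ \beta : V \to V$ is invertible. Then there exists a unique $R$-linear map $\tilde{f} : V \to V'$ such that $\tilde{f}(\alpha(x)) = \alpha'(f(x))$ for all $x \in \beta(V)$.
   Context: In the paper this is applied with $A = Z(M)$, $A' = Z(M')$, $f = Z(W)$ for a bordism $W : M \to M'$ and a TQFT $Z$ valued in $R$-modules, $\alpha = \alpha_M$, $\beta = \beta_M$, $\alpha' = \alpha_{M'}$, $V = V_M$, $V' = V_{M'}$; the statement above is the purely module-theoretic content. *)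

(* Defs.v *)
From HB Require Import structures.
From mathcomp Require Import all_boot all_order all_algebra.
Set Implicit Arguments. Unset Strict Implicit. Unset Printing Implicit Defensive.
Import GRing.Theory.
Local Open Scope ring_scope.

Definition linear_on (R : pzRingType) (N N' : lmodType R)
  (V : {pred N}) (V' : {pred N'}) (g : N -> N') : Prop :=
  {in V, forall v, g v \in V'} /\
  forall a : R, {in V &, forall u v, g (a *: u + v) = a *: g u + g v}.

(* Main.v *)
Require Import Defs.
From HB Require Import structures.
From mathcomp Require Import all_boot all_order all_algebra.
Import GRing.Theory.
Local Open Scope ring_scope.

Theorem mainTheorem1 (R : comPzRingType) (A A' N N' : lmodType R)
  (alpha : {linear A -> N}) (beta : {linear N -> A})
  (alpha' : {linear A' -> N'}) (f : {linear A -> A'})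
  (V : {pred N}) (V' : {pred N'})
  (hV : submod_closed V) (hV' : submod_closed V')
  (hfV : {in V, forall v, alpha' (f (beta v)) \in V'})
  (habV : {in V, forall v, alpha (beta v) \in V})
  (hinv : exists g : N -> N, linear_on V V g /\
      {in V, forall v, [/\ g v \in V, alpha (beta (g v)) = v
                              & g (alpha (beta v)) = v]}) :
  exists ft : N -> N',
    [/\ linear_on V V' ft,
        {in V, forall v, ft (alpha (beta v)) = alpha' (f (beta v))}
      & forall g : N -> N',
          linear_on V V' g ->
          {in V, forall v, g (alpha (beta v)) = alpha' (f (beta v))} ->
          {in V, g =1 ft}].
Proof.
case: hinv => g [[gV glin] gP].
exists (fun v => alpha' (f (beta (g v)))); split.
- split.
  + by move=> v vV; apply: hfV; apply: gV.
  + move=> a u v uV vV /=.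
    by rewrite glin // !linearP.
- by move=> v vV /=; case: (gP v vV) => _ _ ->.
- move=> h _ hP v vV.
  case: (gP v vV) => gvV abg _.
  by rewrite -{1}abg hP.
Qed.
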